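(* Fix positive constants $\varphi_{\max}, k_s, \rho_{\max}, k_v, \mu_{\max}, q_{\min}, \gamma, \beta$ and a substrate feed $s_{\text{in}}>0$. Fix $\alpha\in(0,1)$ and let $\mathcal{D}_\alpha=(0,\psi_\alpha(s_{\text{in}}))$. Then the function $$d\mapsto P_{\text{yield}}(\alpha,d)=\frac{\alpha\beta\gamma\left(s_{\text{in}}-\psi_\alpha^{-1}(d)\right)}{s_{\text{in}}\,\mu^{-1}(d)}$$ is strictly decreasing on $\mathcal{D}_\alpha$.
   Context: Let $\varphi(s)=\frac{\varphi_{\max}s}{k_s+s}$, $\rho(v)=\frac{\rho_{\max}v}{k_v+v}$ for $s,v\ge 0$, and $\mu(q)=\mu_{\max}\left(1-\frac{q_{\min}}{q}\right)$ for $q\ge q_{\min}$. Their inverses are $\varphi^{-1}(y)=\frac{k_s y}{\varphi_{\max}-y}$ for $0\le y<\varphi_{\max}$, $\rho^{-1}(y)=\frac{k_v y}{\rho_{\max}-y}$ for $0\le y<\rho_{\max}$, and $\mu^{-1}(y)=\frac{q_{\min}\mu_{\max}}{\mu_{\max}-y}$ for $0\le y<\mu_{\max}$. For $\alpha\in(0,1)$, the function $\psi_\alpha^{-1}$ is defined by $$\psi_\alpha^{-1}(y)=\varphi^{-1}\!\left(\frac{y}{1-\alpha}\right)+\frac{\rho^{-1}\!\left(y\,\mu^{-1}(y)\right)}{\alpha\beta\gamma}$$ on the set of $y\ge 0$ where all terms are defined (i.e. $y<(1-\alpha)\varphi_{\max}$, $y<\mu_{\max}$, $y\mu^{-1}(y)<\rho_{\max}$);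 it is strictly increasing from $0$ to $+\infty$, and $\psi_\alpha$ denotes its inverse function, an increasing function on $[0,\infty)$. In the underlying bioreactor model, $P_{\text{yield}}=c^*/s_{\text{in}}$ is the bioreactor yield at the coexistence steady state with algal biomass $c^*=\alpha\beta\gamma(s_{\text{in}}-\psi_\alpha^{-1}(d))/\mu^{-1}(d)$, which exists exactly when $0<d<\psi_\alpha(s_{\text{in}})$. *)

(* Defs.v *)
From HB Require Import structures.
From mathcomp Require Import all_boot all_order all_algebra.
From mathcomp Require Import boolp classical_sets reals.
Set Implicit Arguments. Unset Strict Implicit. Unset Printing Implicit Defensive.
Import Order.TTheory GRing.Theory Num.Theory.
Local Open Scope ring_scope.
Local Open Scope classical_set_scope.

Section Bioreactor.
Variable R : realType.
Variables (phimax ks rhomax kv mumax qmin gamma beta : R).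

Definition phi_inv (y : R) : R := ks * y / (phimax - y).
Definition rho_inv (y : R) : R := kv * y / (rhomax - y).
Definition mu_inv (y : R) : R := qmin * mumax / (mumax - y).

Definition psi_inv_dom (alpha y : R) : Prop :=
  [/\ 0 <= y, y < (1 - alpha) * phimax, y < mumax & y * mu_inv y < rhomax].

Definition psi_inv (alpha y : R) : R :=
  phi_inv (y / (1 - alpha)) + rho_inv (y * mu_inv y) / (alpha * beta * gamma).

(* psi_alpha : the inverse function of psi_alpha^{-1}; since psi_alpha^{-1}
   is strictly increasing on its domain, psi_alpha(s) is the supremum of the
   y in the domain with psi_alpha^{-1}(y) <= s. *)
Definition psi (alpha s : R) : R :=
  sup [set y | psi_inv_dom alpha y /\ psi_inv alpha y <= s].

Definition P_yield (sin alpha d : R) : R :=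
  alpha * beta * gamma * (sin - psi_inv alpha d) / (sin * mu_inv d).

End Bioreactor.

(* Main.v *)
Require Import Defs.
From HB Require Import structures.
From mathcomp Require Import all_boot all_order all_algebra.
From mathcomp Require Import boolp classical_sets reals.
From mathcomp Require Import ring lra.
Import Order.TTheory GRing.Theory Num.Theory.
Local Open Scope ring_scope.

Lemma frac_lt (R : realType) (c M a b : R) :
  0 < c -> 0 <= a -> a < b -> b < M -> c * a / (M - a) < c * b / (M - b).
Proof.
move=> c0 a0 ab bM.
have Ma : M - a != 0 by apply/eqP; lra.
have Mb : M - b != 0 by apply/eqP; lra.
have -> : c * b / (M - b) = c * a / (M - a) + c * M * (b - a) / ((M - a) * (M - b)).
  by field; apply/andP.
rewrite ltrDl; apply: divr_gt0; first by apply: mulr_gt0; [apply: mulr_gt0|]; lra.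
by apply: mulr_gt0; lra.
Qed.

Lemma ratio_lt (R : realType) (a1 a2 b1 b2 : R) :
  0 <= a2 -> a2 < a1 -> 0 < b1 -> b1 < b2 -> a2 / b2 < a1 / b1.
Proof.
move=> a20 a21 b10 b12.
have b1n : b1 != 0 by apply/eqP; lra.
have b2n : b2 != 0 by apply/eqP; lra.
have -> : a1 / b1 = a2 / b2 + (a1 * b2 - a2 * b1) / (b1 * b2) by field; apply/andP.
rewrite ltrDl; apply: divr_gt0; last by apply: mulr_gt0; lra.
nra.
Qed.

Lemma g_eq (R : realType) (mumax qmin y : R) :
  y * mu_inv mumax qmin y = qmin * mumax * y / (mumax - y).
Proof. by rewrite /mu_inv mulrA [y * _]mulrC. Qed.

Theorem mainTheorem1 (R : realType)
  (phimax ks rhomax kv mumax qmin gamma beta sin alpha : R) :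
  0 < phimax -> 0 < ks -> 0 < rhomax -> 0 < kv -> 0 < mumax -> 0 < qmin ->
  0 < gamma -> 0 < beta -> 0 < sin -> 0 < alpha -> alpha < 1 ->
  forall d1 d2 : R,
    0 < d1 -> d1 < d2 ->
    d2 < psi phimax ks rhomax kv mumax qmin gamma beta alpha sin ->
    P_yield phimax ks rhomax kv mumax qmin gamma beta sin alpha d2 <
    P_yield phimax ks rhomax kv mumax qmin gamma beta sin alpha d1.
Proof.
move=> hphi hks hrho hkv hmu hq hg hb hs ha0 ha1 d1 d2 hd1 hd12 hd2.
have abg : 0 < alpha * beta * gamma by apply: mulr_gt0; [apply: mulr_gt0|].
have psi_lt : forall a b, 0 <= a -> a < b -> b < (1 - alpha) * phimax ->
    b < mumax -> b * mu_inv mumax qmin b < rhomax ->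
    psi_inv phimax ks rhomax kv mumax qmin gamma beta alpha a <
    psi_inv phimax ks rhomax kv mumax qmin gamma beta alpha b.
  move=> a b a0 ab bphi bmu bg.
  rewrite /psi_inv; apply: ltrD.
    rewrite /phi_inv; apply: frac_lt => //.
    - by apply: divr_ge0; lra.
    - by rewrite ltr_pM2r ?invr_gt0; lra.
    - by rewrite ltr_pdivrMr; lra.
  rewrite ltr_pM2r ?invr_gt0 //; rewrite /rho_inv; apply: frac_lt => //.
  - by rewrite g_eq; apply: divr_ge0; [apply: mulr_ge0; [apply: mulr_ge0|]|]; lra.
  - rewrite !g_eq; apply: frac_lt => //; first exact: mulr_gt0.
set E : set R := (fun y => psi_inv_dom phimax rhomax mumax qmin alpha y /\
           psi_inv phimax ks rhomax kv mumax qmin gamma beta alpha y <= sin).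
have hsup : has_sup E.
  split.
    exists 0; split.
      split => //; first by apply: mulr_gt0; lra.
      by rewrite mul0r.
    rewrite /psi_inv /phi_inv /rho_inv !(mul0r, mulr0, subr0, add0r) //; lra.
  by exists mumax => y [[]] *; apply: ltW.
have hpos : 0 < sup E - d2 by rewrite subr_gt0; exact: hd2.
have [y [[y0 yphi ymu yg] ys] hy] := sup_adherent hpos hsup.
have d2y : d2 < y by move: hy; rewrite opprB addrCA subrr addr0.
have d2g : d2 * mu_inv mumax qmin d2 < rhomax.
  apply: lt_trans yg; rewrite !g_eq; apply: frac_lt => //; first exact: mulr_gt0.
  exact: ltW (lt_trans hd1 hd12).
have p1 := psi_lt d1 d2 (ltW hd1) hd12 ltac:(lra) ltac:(lra) d2g.
have p2 := psi_lt d2 y ltac:(lra) d2y yphi ymu yg.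
rewrite /P_yield -!mulrA; rewrite ltr_pM2l //.
rewrite ltr_pM2l // ltr_pM2l //.
have m1 : 0 < mu_inv mumax qmin d1.
  by rewrite /mu_inv; apply: divr_gt0; [apply: mulr_gt0|]; lra.
have m12 : mu_inv mumax qmin d1 < mu_inv mumax qmin d2.
  rewrite /mu_inv ltr_pM2l ?mulr_gt0 // ltf_pV2 ?posrE; lra.
apply: ratio_lt.
- lra.
- lra.
- exact: mulr_gt0.
- by rewrite ltr_pM2l.
Qed.
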